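(* Let $\Phi$ be the flow of the vector field $F$ on $T_1\Delta$ defined in the context. Then $\Phi_t(\Delta)\subset\Delta$ for all $t\ge0$, and for each $I\subseteq E$, for all $v\in\Delta_I$ and all $t\in\mathbb R$, $\Phi_t(v)\in\Delta$ if and only if $\Phi_t(v)\in\Delta_I$.
   Context: Let $N\ge2$, $E=\{1,\dots,N\}$, $\alpha>1$, and let $A=(A_{i,j})_{i,j\le N}$ be a symmetric matrix with nonnegative entries, $A_{i,j}>0$ for $i\ne j$, and $\sum_j A_{i,j}$ independent of $i$. Let $\Delta=\{v\in\mathbb R_+^N:\ \sum_i v_i=1,\ v_i\le 3/4 \text{ whenever } A_{i,i}=0\}$. For $v\in\Delta$ let $v^\alpha=(v_1^\alpha,\dots,v_N^\alpha)$, $H(v)=\langle Av^\alpha,v^\alpha\rangle=\sum_{i,j}A_{i,j}v_i^\alpha v_j^\alpha$ (which is positive on $\Delta$) and $\pi_i(v)=v_i^\alpha(Av^\alpha)_i/H(v)$. For $r=0,1$ let $T_r\Delta=\{v\in\mathbb R^N:\sum_iv_i=r\}$, let $\imath:T_1\Delta\to\Delta$ be the nearest-point projection $\imath(v)=\mathrm{argmin}\{\|y-v\|:y\in\Delta\}$, and let $F:T_1\Delta\to T_0\Delta$, $F(v)=-v+\pi(\imath(v))$; $F$ is Lipschitz and $\Phi:\mathbb R\times T_1\Delta\to T_1\Delta$ denotes its flow. For $I\subseteq E$, $\Delta_I=\{v\in\Delta: v_i=0\ \forall i\in E\setminus I\}$. *)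

(* Defs.v *)
From mathcomp Require Import all_boot all_order all_algebra.
From mathcomp Require Import all_classical all_reals all_analysis.
Set Implicit Arguments. Unset Strict Implicit. Unset Printing Implicit Defensive.
Import Order.TTheory GRing.Theory Num.Theory.
Local Open Scope ring_scope.

Definition inDelta (R : realType) (N : nat) (A : 'M[R]_N) (v : 'I_N -> R) : Prop :=
  (forall i, 0 <= v i) /\ (\sum_i v i = 1) /\ (forall i, A i i = 0 -> v i <= 3 / 4).

Definition inDeltaI (R : realType) (N : nat) (A : 'M[R]_N) (I : {set 'I_N})
  (v : 'I_N -> R) : Prop :=
  inDelta A v /\ (forall i, i \notin I -> v i = 0).

Definition vpow (R : realType) (N : nat) (alpha : R) (v : 'I_N -> R) : 'I_N -> R :=
  fun i => v i `^ alpha.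

Definition Hfun (R : realType) (N : nat) (A : 'M[R]_N) (alpha : R) (v : 'I_N -> R) : R :=
  \sum_i \sum_j A i j * vpow alpha v i * vpow alpha v j.

Definition pifun (R : realType) (N : nat) (A : 'M[R]_N) (alpha : R) (v : 'I_N -> R)
  : 'I_N -> R :=
  fun i => vpow alpha v i * (\sum_j A i j * vpow alpha v j) / Hfun A alpha v.

Definition edist (R : realType) (N : nat) (v w : 'I_N -> R) : R :=
  Num.sqrt (\sum_i (v i - w i) ^+ 2).

Definition is_nearest_proj (R : realType) (N : nat) (A : 'M[R]_N)
  (iota : ('I_N -> R) -> ('I_N -> R)) : Prop :=
  forall v, \sum_i v i = 1 ->
    inDelta A (iota v) /\
    (forall y, inDelta A y -> edist (iota v) v <= edist y v).

Definition Fvec (R : realType) (N : nat) (A : 'M[R]_N) (alpha : R)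
  (iota : ('I_N -> R) -> ('I_N -> R)) (v : 'I_N -> R) : 'I_N -> R :=
  fun i => - v i + pifun A alpha (iota v) i.

Definition is_flow (R : realType) (N : nat) (A : 'M[R]_N) (alpha : R)
  (iota : ('I_N -> R) -> ('I_N -> R)) (Phi : R -> ('I_N -> R) -> ('I_N -> R)) : Prop :=
  forall v, \sum_i v i = 1 ->
    Phi 0 v = v /\
    forall t : R, (\sum_i Phi t v i = 1) /\
      forall i, is_derive t 1 (fun s => Phi s v i) (Fvec A alpha iota (Phi t v) i).

(* Main.v *)
Require Import Defs.
From mathcomp Require Import all_boot all_order all_algebra.
From mathcomp Require Import all_classical all_reals all_analysis.
From mathcomp Require Import ring lra.
Import Order.TTheory GRing.Theory Num.Theory.
Local Open Scope ring_scope.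

Lemma le_sum_term {R : realType} {N : nat} j (F : 'I_N -> R) :
  (forall i, 0 <= F i) -> F j <= \sum_i F i.
Proof. by move=> F0; rewrite (bigD1 j) //= lerDl sumr_ge0. Qed.

Lemma Hfun_ge0 (R : realType) (N : nat) (A : 'M[R]_N) alpha v :
  (forall i j, 0 <= A i j) -> 0 <= Hfun A alpha v.
Proof.
by move=> A0; rewrite /Hfun; apply: sumr_ge0 => i _; apply: sumr_ge0 => j _;
  rewrite /vpow !mulr_ge0 ?powR_ge0.
Qed.

Lemma pi_ge0 (R : realType) (N : nat) (A : 'M[R]_N) alpha v i :
  (forall i j, 0 <= A i j) -> 0 <= pifun A alpha v i.
Proof.
move=> A0; rewrite /pifun divr_ge0 ?Hfun_ge0 // mulr_ge0 /vpow ?powR_ge0 //.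
by apply: sumr_ge0 => j _; rewrite mulr_ge0 ?powR_ge0.
Qed.

Lemma H_ge_term (R : realType) (N : nat) (A : 'M[R]_N) alpha v j k :
  (forall i j, 0 <= A i j) ->
  A j k * vpow alpha v j * vpow alpha v k <= Hfun A alpha v.
Proof.
move=> A0; rewrite /Hfun.
have T0 : forall a b, 0 <= A a b * vpow alpha v a * vpow alpha v b.
  by move=> a b; rewrite /vpow !mulr_ge0 ?powR_ge0.
apply: (@le_trans _ _ (\sum_b A j b * vpow alpha v j * vpow alpha v b)).
  by apply: (le_sum_term k (fun b => A j b * vpow alpha v j * vpow alpha v b)) => b.
apply: (le_sum_term j (fun a => \sum_b A a b * vpow alpha v a * vpow alpha v b)).
by move=> a; apply: sumr_ge0 => b _.
Qed.

Lemma pi_le_half (R : realType) (N : nat) (A : 'M[R]_N) alpha v i :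
  A^T = A -> (forall i j, 0 <= A i j) -> A i i = 0 ->
  pifun A alpha v i <= 1 / 2.
Proof.
move=> AT A0 Aii.
have Asym : forall a b, A a b = A b a by move=> a b; rewrite -[in LHS]AT mxE.
set p := vpow alpha v.
have p0 : forall a, 0 <= p a by move=> a; rewrite /p /vpow powR_ge0.
set X := p i * \sum_j A i j * p j.
have H2 : 2 * X <= Hfun A alpha v.
  rewrite /Hfun (bigD1 i) //=.
  have -> : \sum_j A i j * vpow alpha v i * vpow alpha v j = X.
    by rewrite /X mulr_sumr; apply: eq_bigr => j _; rewrite /p; ring.
  rewrite mulr2n mulrDl mul1r lerD2l.
  apply: (@le_trans _ _ (\sum_(k | k != i) A k i * p k * p i)); last first.
    apply: ler_sum => k _; apply: (le_sum_term i (fun j => A k j * p k * p j)).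
    by move=> j; rewrite !mulr_ge0.
  rewrite le_eqVlt; apply/orP; left; apply/eqP.
  rewrite /X mulr_sumr (bigD1 i) //= Aii mul0r mulr0 add0r.
  by apply: eq_bigr => k _; rewrite Asym; ring.
rewrite /pifun -/p -/X.
have [H0|Hpos] := eqVneq (Hfun A alpha v) 0.
  by rewrite H0 invr0 mulr0.
have Hgt : 0 < Hfun A alpha v by rewrite lt_neqAle eq_sym Hpos Hfun_ge0.
rewrite ler_pdivrMr //; lra.
Qed.

Lemma iota_id {R : realType} {N : nat} (A : 'M[R]_N) iota v :
  is_nearest_proj A iota -> inDelta A v -> iota v = v.
Proof.
move=> Hp [v0 [v1 v3]].
have [_ Hmin] := Hp v v1.
have := Hmin v (conj v0 (conj v1 v3)).
rewrite /Defs.edist.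
have -> : \sum_i (v i - v i) ^+ 2 = 0 :> R.
  by rewrite big1 // => i _; rewrite subrr expr2 mul0r.
rewrite sqrtr0 => Hle.
have Hs : \sum_i (iota v i - v i) ^+ 2 = 0 :> R.
  have : Num.sqrt (\sum_i (iota v i - v i) ^+ 2) == 0.
    by rewrite eq_le Hle sqrtr_ge0.
  rewrite sqrtr_eq0 => H; apply/eqP; rewrite eq_le H sumr_ge0 // => i _.
  exact: sqr_ge0.
apply/funext => i.
have := @psumr_eq0P _ _ _ (fun j => (iota v j - v j) ^+ 2) (fun j _ => sqr_ge0 (iota v j - v j)) Hs i isT.
by move/eqP; rewrite sqrf_eq0 subr_eq0 => /eqP.
Qed.

Lemma pair_exists {R : realType} {N : nat} (A : 'M[R]_N) (x : 'I_N -> R) :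
  (2 <= N)%N -> (forall i j, 0 <= A i j) -> (forall i j, i != j -> 0 < A i j) ->
  inDelta A x ->
  exists j k, 0 < A j k /\ (4 * N%:R)^-1 <= x j /\ (4 * N%:R)^-1 <= x k.
Proof.
move=> N2 A0 Aoff [x0 [x1 x3]].
have Nn0 : (0 < N)%N by apply: leq_trans N2.
have Npos : 0 < N%:R :> R by rewrite ltr0n.
pose i0 : 'I_N := Ordinal Nn0.
have [m Hm] : exists m, forall j, x j <= x m.
  case: (@arg_maxP _ _ _ i0 xpredT x isT) => m _ Hm.
  by exists m => j; apply: Hm.
set c := (4 * N%:R)^-1 : R.
have cpos : 0 < c by rewrite invr_gt0 mulr_gt0.
have cN : c * N%:R = 1 / 4 by rewrite /c; field; rewrite gt_eqF.
have xm1 : 1 <= N%:R * x m.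
  have : \sum_j x j <= \sum_(j : 'I_N) x m by apply: ler_sum => j _; exact: Hm.
  by rewrite x1 sumr_const card_ord mulr_natl.
have xmc : c <= x m.
  rewrite -(ler_pM2l (_ : 0 < 4 * N%:R)) ?mulr_gt0 // /c mulfV ?gt_eqF ?mulr_gt0 //.
  have := x0 m; nra.
have [Amm|Amm] := boolP (0 < A m m).
  by exists m, m.
have Amm0 : A m m = 0.
  by apply/eqP; rewrite eq_le A0 andbT; rewrite lt_neqAle A0 andbT eq_sym negbK in Amm; rewrite (eqP Amm).
have xm34 := x3 m Amm0.
case: (boolP [exists k, (k != m) && (c <= x k)]).
  move/existsP => [k /andP[km xk]].
  exists m, k; split => //; first by apply: Aoff; rewrite eq_sym.
rewrite negb_exists => /forallP Hk.
have rest : \sum_(k | k != m) x k <= \sum_(k | k != m) c.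
  apply: ler_sum => k km; have := Hk k; rewrite km /= -ltNge => /ltW //.
have e1 : \sum_k x k = x m + \sum_(k | k != m) x k by rewrite (bigD1 m).
have e2 : \sum_(k : 'I_N) c = c + \sum_(k | k != m) c by rewrite (bigD1 m).
have e3 : \sum_(k : 'I_N) c = c * N%:R by rewrite sumr_const card_ord mulr_natr.
exfalso; lra.
Qed.

Lemma pi_le_K {R : realType} {N : nat} (A : 'M[R]_N) alpha :
  (2 <= N)%N -> 1 < alpha -> (forall i j, 0 <= A i j) ->
  (forall i j, i != j -> 0 < A i j) ->
  exists K : R, forall x, inDelta A x -> forall i, pifun A alpha x i <= K * x i.
Proof.
move=> N2 a1 A0 Aoff.
have Nn0 : (0 < N)%N by apply: leq_trans N2.
have Npos : 0 < N%:R :> R by rewrite ltr0n.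
set R0 := \sum_i \sum_j A i j.
have R00 : 0 <= R0 by apply: sumr_ge0 => i _; apply: sumr_ge0.
set c := ((4 * N%:R)^-1 : R) `^ alpha.
have cpos : 0 < c by rewrite powR_gt0 // invr_gt0 mulr_gt0.
exists (\sum_j \sum_k R0 / (A j k * (c * c))).
move=> x Dx i; have Dx' := Dx; case: Dx' => [x0 [x1 x3]].
have xle1 : forall j, x j <= 1 by move=> j; rewrite -x1; exact: le_sum_term.
have a0 : alpha != 0 by rewrite gt_eqF // (lt_trans ltr01 a1).
have powle : forall j, x j `^ alpha <= x j.
  move=> j; have [->|xj] := eqVneq (x j) 0; first by rewrite powR0.
  by apply: ge1r_powR; [rewrite lt_neqAle eq_sym xj x0 xle1 | exact: ltW].
have num : vpow alpha x i * (\sum_j A i j * vpow alpha x j) <= x i * R0.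
  apply: ler_pM; [exact: powR_ge0 | | exact: powle |].
    by apply: sumr_ge0 => j _; rewrite mulr_ge0 ?powR_ge0.
  apply: (@le_trans _ _ (\sum_j A i j)).
    apply: ler_sum => j _; apply: ler_piMr => //.
    exact: le_trans (powle j) (xle1 j).
  by apply: (le_sum_term i (fun a => \sum_j A a j)) => a; apply: sumr_ge0.
have [j [k [Ajk [xj xk]]]] := @pair_exists _ _ A x N2 A0 Aoff Dx.
have cle : forall l, (4 * N%:R)^-1 <= x l -> c <= x l `^ alpha.
  move=> l xl; apply: ge0_ler_powR => //; first exact: ltW (lt_trans ltr01 a1).
    by rewrite nnegrE invr_ge0 mulr_ge0 // ltW.
  by rewrite nnegrE.
have D0 : 0 < A j k * (c * c) by rewrite !mulr_gt0.
have HD : A j k * (c * c) <= Hfun A alpha x.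
  apply: le_trans (@H_ge_term _ _ A alpha x j k A0).
  rewrite mulrA; apply: ler_pM; rewrite ?mulr_ge0 ?(ltW cpos) ?A0 ?cle //.
  by apply: ler_pM; rewrite ?A0 ?(ltW cpos) ?cle.
have Hpos : 0 < Hfun A alpha x by apply: lt_le_trans HD.
rewrite /pifun.
apply: (@le_trans _ _ (x i * R0 / (A j k * (c * c)))).
  apply: ler_pM => //.
    by rewrite mulr_ge0 ?powR_ge0 // sumr_ge0 // => l _; rewrite mulr_ge0 ?powR_ge0.
    by rewrite invr_ge0 ltW.
  by rewrite lef_pV2 ?posrE.
rewrite [_ * x i]mulrC -mulrA ler_wpM2l //.
apply: (@le_trans _ _ (\sum_k R0 / (A j k * (c * c)))).
  by apply: (le_sum_term k (fun b => R0 / (A j b * (c * c)))) => b;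
    rewrite divr_ge0 // !mulr_ge0 // ltW.
apply: (le_sum_term j (fun a => \sum_b R0 / (A a b * (c * c)))) => a.
by apply: sumr_ge0 => b _; rewrite divr_ge0 // !mulr_ge0 // ltW.
Qed.
Lemma expmono (R : realType) (f g : R -> R) (k a b : R) :
  (forall s : R, is_derive s 1 f (g s)) -> a <= b ->
  (forall s, a <= s -> s <= b -> k * f s <= g s) ->
  expR (- k * a) * f a <= expR (- k * b) * f b.
Proof.
move=> df ab hg.
pose h := fun s : R => expR (- k * s) * f s.
have dh : forall s : R, is_derive s 1 h (expR (- k * s) * (g s - k * f s)).
  move=> s.
  have dl : is_derive s 1 (fun s : R => - k * s) (- k).
    have := @is_deriveZ R R R id (-k) s 1 1 (is_derive_id _ _).
    by rewrite /GRing.scale /= mulr1.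
  have de : is_derive s 1 (expR \o (fun s : R => - k * s)) (expR (- k * s) * (- k)).
    exact: is_derive1_comp.
  have := is_deriveM de (df s).
  move=> H; apply: (is_derive_eq H).
  rewrite /GRing.scale /=; ring.
apply: (@ger0_derive1_ndecr R h a b) => //.
- move=> x; rewrite in_itv /= => /andP[ax xb].
  rewrite derive1E (@derive_val _ _ _ _ _ _ _ (dh x)).
  apply: mulr_ge0; first exact: expR_ge0.
  by rewrite subr_ge0 hg // ltW.
- apply: derivable_within_continuous => x _; by case: (dh x).
Qed.

Lemma fwd_delta (R : realType) (N : nat) (alpha : R) (A : 'M[R]_N)
  (iota : ('I_N -> R) -> ('I_N -> R)) (Phi : R -> ('I_N -> R) -> ('I_N -> R)) :
  A^T = A -> (forall i j, 0 <= A i j) -> is_flow A alpha iota Phi ->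
  forall v, \sum_i v i = 1 -> forall a b, a <= b ->
  inDelta A (Phi a v) -> inDelta A (Phi b v).
Proof.
move=> AT A0 Hf v v1 a b ab [xa0 [xa1 xa3]].
have [_ Hv] := Hf v v1.
split; [|split].
- move=> i.
  have := @expmono R (fun s => Phi s v i) (fun s => Fvec A alpha iota (Phi s v) i)
    (-1) a b (fun s => (Hv s).2 i) ab.
  have H : (forall s, a <= s -> s <= b -> -1 * Phi s v i <= Fvec A alpha iota (Phi s v) i).
    move=> s _ _; rewrite /Fvec.
    have := @pi_ge0 _ _ A alpha (iota (Phi s v)) i A0; lra.
  move=> /(_ H) Hle.
  have epos := expR_gt0 (- -1 * b).
  rewrite -(pmulr_rge0 _ epos); apply: le_trans Hle.
  by rewrite mulr_ge0 ?expR_ge0.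
- exact: (Hv b).1.
- move=> i Aii.
  have D : forall s : R, is_derive s 1 (fun s => 3 / 4 - Phi s v i)
      (- Fvec A alpha iota (Phi s v) i).
    move=> s.
    have := @is_deriveB R R R (cst (3 / 4)) (fun s => Phi s v i) s 1 0 _
      (is_derive_cst _ _ _) ((Hv s).2 i).
    by move=> H; apply: (is_derive_eq H); rewrite sub0r.
  have := @expmono R (fun s => 3 / 4 - Phi s v i) (fun s => - Fvec A alpha iota (Phi s v) i)
    (-1) a b D ab.
  have H : (forall s, a <= s -> s <= b ->
     -1 * (3 / 4 - Phi s v i) <= - Fvec A alpha iota (Phi s v) i).
    move=> s _ _; rewrite /Fvec.
    have := @pi_le_half _ _ A alpha (iota (Phi s v)) i AT A0 Aii; lra.
  move=> /(_ H) Hle.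
  have epos := expR_gt0 (- -1 * b).
  have : 0 <= 3 / 4 - Phi b v i :> R.
    rewrite -(pmulr_rge0 _ epos); apply: le_trans Hle.
    by rewrite mulr_ge0 ?expR_ge0 // subr_ge0 xa3.
  lra.
Qed.

Theorem lemma3p1 (R : realType) (N : nat) (alpha : R) (A : 'M[R]_N)
  (iota : ('I_N -> R) -> ('I_N -> R)) (Phi : R -> ('I_N -> R) -> ('I_N -> R)) :
  (2 <= N)%N -> 1 < alpha ->
  A^T = A ->
  (forall i j, 0 <= A i j) ->
  (forall i j, i != j -> 0 < A i j) ->
  (forall i k, \sum_j A i j = \sum_j A k j) ->
  is_nearest_proj A iota ->
  is_flow A alpha iota Phi ->
  (forall (t : R) v, 0 <= t -> inDelta A v -> inDelta A (Phi t v)) /\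
  (forall (I : {set 'I_N}) v (t : R), inDeltaI A I v ->
     (inDelta A (Phi t v) <-> inDeltaI A I (Phi t v))).
Proof.
move=> N2 a1 AT A0 Aoff _ Hp Hf.
have fwd := @fwd_delta R N alpha A iota Phi AT A0 Hf.
split.
  move=> t v t0 Dv; have v1 := Dv.2.1.
  have [P0 _] := Hf v v1.
  by apply: (fwd v v1 0 t t0); rewrite P0.
move=> I v t [Dv vI]; split; last by case.
move=> Dt; split => // i iI.
have v1 := Dv.2.1.
have [P0 Hv] := Hf v v1.
have xi0 : Phi 0 v i = 0 by rewrite P0 (vI i iI).
have xt0 := Dt.1 i.
have [t0|t0] := lerP 0 t.
- have [K HK] := @pi_le_K R N A alpha N2 a1 A0 Aoff.
  have D : forall s : R, is_derive s 1 (fun s => - Phi s v i)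
      (- Fvec A alpha iota (Phi s v) i).
    move=> s; have := @is_deriveN R R R (fun s => Phi s v i) s 1 _ ((Hv s).2 i).
    by move=> H; apply: (is_derive_eq H).
  have := @expmono R (fun s => - Phi s v i) (fun s => - Fvec A alpha iota (Phi s v) i)
    (K - 1) 0 t D t0.
  have H : (forall s, 0 <= s -> s <= t ->
     (K - 1) * (- Phi s v i) <= - Fvec A alpha iota (Phi s v) i).
    move=> s s0 st; rewrite /Fvec.
    have Ds : inDelta A (Phi s v) by apply: (fwd v v1 0 s s0); rewrite P0.
    rewrite (@iota_id _ _ A iota _ Hp Ds).
    have := HK _ Ds i; nra.
  move=> /(_ H); rewrite xi0 oppr0 mulr0 => Hle.
  have epos := expR_gt0 (- (K - 1) * t).
  have : 0 <= - Phi t v i by rewrite -(pmulr_rge0 _ epos).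
  lra.
- have := @expmono R (fun s => Phi s v i) (fun s => Fvec A alpha iota (Phi s v) i)
    (-1) t 0 (fun s => (Hv s).2 i) (ltW t0).
  have H : (forall s, t <= s -> s <= 0 -> -1 * Phi s v i <= Fvec A alpha iota (Phi s v) i).
    move=> s _ _; rewrite /Fvec.
    have := @pi_ge0 _ _ A alpha (iota (Phi s v)) i A0; lra.
  move=> /(_ H); rewrite xi0 mulr0 => Hle.
  have epos := expR_gt0 (- -1 * t).
  have : Phi t v i <= 0 by rewrite -(pmulr_rle0 _ epos).
  lra.
Qed.
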